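(* Let $\lambda=(\lambda_1>\lambda_2>\dots>\lambda_r>0)$ be a strict partition and let $q_\lambda$ be the rational function in $q$ obtained from the Schur $Q$-function $Q_\lambda$, written as a polynomial in $Q_{(1)},Q_{(2)},\dots$, by substituting $Q_{(m)}\mapsto a_m$ for every $m\ge1$, where $$a_m=\prod_{j=1}^m \mathbf{i}\,\frac{q^{j-1}+q^{1-j}}{q^j-q^{-j}}.$$ Then $$q_\lambda=\prod_{j=1}^r a_{\lambda_j}\prod_{1\le i<j\le r}\frac{[\lambda_i-\lambda_j]}{[\lambda_i+\lambda_j]}.$$
   Context: $\mathbf{i}=\sqrt{-1}$ and $[k]=(q^k-q^{-k})/(q-q^{-1})$ is the quantum integer, $q$ a formal variable. Schur $Q$-functions as polynomials in $Q_{(1)},Q_{(2)},\dots$: set $Q_{(0)}=1$; for integers $r>s\ge0$ set $Q_{(r,s)}=Q_{(r)}Q_{(s)}+2\sum_{i=1}^{s}(-1)^iQ_{(r+i)}Q_{(s-i)}$ (so $Q_{(r,0)}=Q_{(r)}$); for a strict partition $\lambda$ with $r$ parts, append a part $\lambda_{r+1}=0$ if $r$ is odd, and define $Q_\lambda$ as the Pfaffian of the antisymmetric matrix with $(i,j)$ entry $Q_{(\lambda_i,\lambda_j)}$ for $i<j$. This expresses $Q_\lambda$ as a universal polynomial in the $Q_{(m)}$ (these are the Hall–Littlewood polynomials at $t=-1$, i.e. characters of Sergeev's polynomial representations of $\mathfrak q(N)$ up to powers of $2$). *)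

(* Defs.v *)
From HB Require Import structures.
From mathcomp Require Import all_boot all_order all_algebra algC fraction.
Set Implicit Arguments. Unset Strict Implicit. Unset Printing Implicit Defensive.
Import Order.TTheory GRing.Theory Num.Theory.
Local Open Scope ring_scope.

(* ---------- Schur Q-functions as universal polynomials in Q_(1), Q_(2), ... ----------
   We work with an arbitrary commutative ring R and an arbitrary assignment
   Q : nat -> R of values to Q_(1), Q_(2), ...; the value at index 0 is ignored
   and Q_(0) := 1.  Then Qlam Q lam is exactly the universal polynomial Q_lam
   evaluated at Q_(m) |-> Q m. *)

Section SchurQ.
Variable R : comPzRingType.
Variable Q : nat -> R.

Definition Qone (m : nat) : R := if m == 0%N then 1 else Q m.

Definition Qtwo (r s : nat) : R :=
  Qone r * Qone s + 2 * \sum_(1 <= i < s.+1) (-1) ^+ i * Qone (r + i) * Qone (s - i).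

(* Pfaffian of the antisymmetric matrix with (i,j)-entry (i<j) M x_i x_j,
   for the sequence of labels s = [:: x_1; ...; x_n], via the expansion along
   the first row:  Pf(x_1 :: t) = sum_k (-1)^k M x_1 t_k Pf(t without t_k).
   The natural number argument is fuel (= size of the sequence). *)
Fixpoint pfaff_aux (M : nat -> nat -> R) (fuel : nat) (s : seq nat) : R :=
  match fuel with
  | 0%N => if s is [::] then 1 else 0
  | fuel'.+1 =>
    match s with
    | [::] => 1
    | x :: t => \sum_(k < size t)
                 (-1) ^+ k * M x (nth 0%N t k) * pfaff_aux M fuel' (take k t ++ drop k.+1 t)
    end
  end.

Definition pfaff (M : nat -> nat -> R) (s : seq nat) : R := pfaff_aux M (size s) s.

Definition Qlam (lam : seq nat) : R :=
  pfaff Qtwo (if odd (size lam) then rcons lam 0%N else lam).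

End SchurQ.

Definition strict_partition (lam : seq nat) : bool :=
  sorted (fun a b => b < a)%N lam && all (fun a => 0 < a)%N lam.

Definition RF := {fraction {poly algC}}.

Definition qv : RF := FracField.tofrac ('X : {poly algC}).
Definition iv : RF := FracField.tofrac (('i : algC)%:P).

Definition qint (k : nat) : RF := (qv ^+ k - qv ^- k) / (qv - qv^-1).

Definition aq (m : nat) : RF :=
  \prod_(1 <= j < m.+1) (iv * (qv ^+ j.-1 + qv ^- j.-1) / (qv ^+ j - qv ^- j)).

(* Main.v *)
Require Import Defs.
From HB Require Import structures.
From mathcomp Require Import all_boot all_order all_algebra algC fraction.
From mathcomp Require Import ring lra zify.
Import Order.TTheory GRing.Theory Num.Theory.
Set Implicit Arguments. Unset Strict Implicit. Unset Printing Implicit Defensive.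
Local Open Scope ring_scope.

Definition ff (K : fieldType) (u v : K) := (u - v) / (u * v - 1).

Definition rmk (T : Type) (k : nat) (w : seq T) := take k w ++ drop k.+1 w.

Section Abstract.
Variable K : fieldType.
Implicit Types (w : seq K) (x y z v : K).

Fixpoint PP w : K := if w is v :: w' then (\prod_(y <- w') ff v y) * PP w' else 1.

Lemma ffN x y : ff y x = - ff x y.
Proof. by rewrite /ff -mulNr opprB (mulrC y). Qed.

Lemma ffxx x : ff x x = 0.
Proof. by rewrite /ff subrr mul0r. Qed.

Lemma ff_neq0 x y : x != y -> x * y != 1 -> ff x y != 0.
Proof.
move=> h1 h2; rewrite /ff mulf_neq0 // ?invr_eq0 subr_eq0 //.
Qed.

Lemma big_rmk (F : K -> K) w k : (k < size w)%N ->
  \prod_(y <- w) F y = F (nth 0 w k) * \prod_(y <- rmk k w) F y.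
Proof.
move=> hk; rewrite -{1}(cat_take_drop k w) (drop_nth 0 hk) /rmk !big_cat big_cons /=.
by rewrite mulrCA.
Qed.

Lemma PP_rmk w k : (k < size w)%N ->
  PP w = (-1) ^+ k * (\prod_(y <- rmk k w) ff (nth 0 w k) y) * PP (rmk k w).
Proof.
elim: w k => [|v w IH] [|k] //= hk.
  by rewrite /rmk /= drop0 expr0 mul1r.
rewrite /rmk /= -/(rmk k w) /= (IH k) // (big_rmk (ff v) hk) big_cons ffN.
rewrite exprS; ring.
Qed.

Lemma rmk_rem w k : uniq w -> (k < size w)%N -> rmk k w = rem (nth 0 w k) w.
Proof.
elim: w k => [|v w IH] [|k] //= /andP[vw uw] hk.
  by rewrite /rmk /= drop0 eqxx.
rewrite /rmk /= -/(rmk k w) IH //.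
case: eqP => // e; move: vw; by rewrite e mem_nth.
Qed.

Definition Cinv x w := \prod_(y <- rem x w) ff x y.

Definition Phi z w := \sum_(x <- w) ff z x / Cinv x w - \prod_(x <- w) ff z x.

Lemma size_lin y : (size ('X * y%:P - 1 : {poly K})%R <= 2)%N.
Proof.
rewrite mulrC -polyC1 -polyCN size_MXaddC.
by case: ifP => // _; rewrite ltnS size_polyC_leq1.
Qed.

Lemma size_prod_lin (s : seq K) :
  (size (\prod_(y <- s) ('X * y%:P - 1) : {poly K})%R <= (size s).+1)%N.
Proof.
elim: s => [|y s IH]; first by rewrite big_nil size_poly1.
rewrite big_cons /=.
apply: (leq_trans (size_polyMleq _ _)).
have h := leq_add (size_lin y) IH.
move: h; case: (_ + _)%N => //= n; rewrite add2n !ltnS.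
Qed.

Definition hE := (hornerM, hornerD, hornerN, hornerX, hornerC, hornerXsubC, hornerMXaddC).
Lemma horner1K (z : K) : (1 : {poly K}).[z] = 1.
Proof. by rewrite -polyC1 hornerC. Qed.

Lemma Phi_const w z1 z2 : uniq w -> 0 \notin w ->
  (forall x, x \in w -> z1 * x != 1) -> (forall x, x \in w -> z2 * x != 1) ->
  Phi z1 w = Phi z2 w.
Proof.
move=> uw w0 hz1 hz2.
pose L : {poly K} := \sum_(x <- w) ('X - x%:P) * \prod_(y <- rem x w) ('X * y%:P - 1) * ((Cinv x w)^-1)%:P.
pose R : {poly K} := \prod_(x <- w) ('X - x%:P).
pose P := L - R.
have evalP : forall z, (forall x, x \in w -> z * x != 1) ->
    P.[z] = Phi z w * \prod_(x <- w) (z * x - 1).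
  move=> z hz; rewrite /P hornerD hornerN /L /R horner_sum horner_prod /Phi mulrBl big_distrl /=.
  congr (_ - _).
    apply: eq_big_seq => x xw; rewrite !hE horner_prod (big_rem x xw) /=.
    have hx : z * x - 1 != 0 by rewrite subr_eq0 hz.
    set c := (Cinv x w)^-1.
    set Q := \prod_(y <- rem x w) _.
    have -> : Q = \prod_(y <- rem x w) (z * y - 1).
      by apply: eq_bigr => y _; rewrite !hE.
    rewrite /ff; field; exact: hx.
  rewrite -big_split /=; apply: eq_big_seq => x xw; rewrite !hE /ff.
  have hx : z * x - 1 != 0 by rewrite subr_eq0 hz.
  field; exact: hx.
have root0 : forall x0, x0 \in w -> P.[x0^-1] = 0.
  move=> x0 x0w.
  have x00 : x0 != 0 by apply: contraNneq w0 => <-.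
  rewrite /P hornerD hornerN /L /R horner_sum horner_prod (big_rem x0 x0w) /=.
  rewrite [\sum_(y <- rem x0 w) _]big1_seq ?addr0; last first.
    move=> x /andP[_ xr].
    have := xr; rewrite mem_rem_uniq // inE => /andP[xx0 xw].
    have x0r : x0 \in rem x w by rewrite mem_rem_uniq // inE eq_sym xx0 x0w.
    by rewrite !hE horner_prod (big_rem x0 x0r) /= !hE mulVf // subrr mul0r mulr0 mul0r.
  rewrite (big_rem x0 x0w) /= !hE horner_prod /Cinv -prodfV -mulrA -big_split /=.
  rewrite -mulrBr; apply/eqP; rewrite mulf_eq0; apply/orP; right; apply/eqP.
  apply/eqP; rewrite subr_eq0; apply/eqP; apply: eq_big_seq => y yr.
  have := yr; rewrite mem_rem_uniq // inE => /andP[yx0 yw].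
  have h : x0 - y != 0 by rewrite subr_eq0 eq_sym.
  rewrite !hE /ff invf_div; field; by rewrite h x00.
have sizeP : (size P <= (size w).+1)%N.
  rewrite /P (leq_trans (size_polyD _ _)) // size_polyN /R size_prod_XsubC geq_max leqnn andbT.
  rewrite /L big_seq; apply: (big_ind (fun p : {poly K} => (size p <= (size w).+1)%N)).
  - by rewrite size_poly0.
  - by move=> p1 p2 h1 h2; rewrite (leq_trans (size_polyD _ _)) // geq_max h1 h2.
  move=> x xw.
  set A : {poly K} := 'X - x%:P.
  set B : {poly K} := \prod_(y <- rem x w) _.
  set C : {poly K} := ((Cinv x w)^-1)%:P.
  have e1 := size_polyMleq (A * B) C.
  have e2 := size_polyMleq A B.
  have e3 : (size B <= (size (rem x w)).+1)%N by exact: size_prod_lin.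
  have e4 : (size C <= 1)%N by exact: size_polyC_leq1.
  have e5 : size A = 2 by exact: size_XsubC.
  rewrite size_rem // in e3.
  have sw : (0 < size w)%N by case: (w) xw.
  rewrite prednK // in e3.
  have f1 : ((size (A * B)%R + size C).-1 <= size (A * B)%R)%N.
    by case: (size C) e4 => [|[|]] //= _; rewrite ?addn0 ?addn1 // leq_pred.
  rewrite e5 /= in e2.
  apply: (leq_trans e1); apply: (leq_trans f1); apply: (leq_trans e2).
  by rewrite ltnS.
have allr : all (root P) (map GRing.inv w).
  by apply/allP => r /mapP[x xw ->]; rewrite /root root0.
have ur : uniq_roots (map GRing.inv w).
  by rewrite uniq_rootsE map_inj_uniq //; exact: invr_inj.
have [q Pq] := uniq_roots_prod_XsubC allr ur.
have qc : q = (q`_0)%:P.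
  case: (eqVneq q 0) => [->|qn0]; first by rewrite coef0 polyC0.
  apply: size1_polyC.
  move: sizeP; rewrite Pq size_Mmonic ?monic_prod_XsubC // size_prod_XsubC size_map.
  by rewrite addnS /= -addn1 addnC leq_add2l.
have form : forall z, (forall x, x \in w -> z * x != 1) ->
    Phi z w = q`_0 / \prod_(x <- w) x.
  move=> z hz.
  have D0 : \prod_(x <- w) (z * x - 1) != 0.
    by rewrite prodf_seq_neq0; apply/allP => x xw; rewrite subr_eq0 hz.
  have E : \prod_(x <- w) (z * x - 1) = \prod_(x <- w) x * \prod_(x <- w) (z - x^-1).
    rewrite -big_split /=; apply: eq_big_seq => x xw.
    have x0 : x != 0 by apply: contraNneq w0 => <-.
    by rewrite mulrBr mulfV // mulrC.
  have Pz : P.[z] = q`_0 * \prod_(x <- w) (z - x^-1).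
    by rewrite Pq qc hornerM hornerC horner_prod big_map coefC /=; congr (_ * _); apply: eq_bigr => x _; rewrite hornerXsubC.
  have := evalP z hz; rewrite Pz E => h.
  have X0 : \prod_(x <- w) x != 0.
    by rewrite prodf_seq_neq0; apply/allP => x xw; apply: contraNneq w0 => <-.
  have Y0 : \prod_(x <- w) (z - x^-1) != 0.
    by apply: contraNneq D0 => e; rewrite E e mulr0.
  move: h X0 Y0; set X := \prod_(x <- w) x; set Y := \prod_(x <- w) (z - x^-1) => h X0 Y0.
  apply: (mulIf (mulf_neq0 X0 Y0)); rewrite -h; field; by rewrite X0.
by rewrite (form z1 hz1) (form z2 hz2).
Qed.


Fixpoint good w : Prop :=
  if w is v :: w' then
    good w' /\ [/\ v != 0, v != -1, v \notin w',
        (forall y, y \in w' -> v * y != 1) & (w' != [::] -> v * v != 1)]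
  else True.

Lemma good_props w : good w ->
  [/\ uniq w, 0 \notin w, -1 \notin w &
      (forall x y, x \in w -> y \in w -> x != y -> x * y != 1)].
Proof.
elim: w => [|v w IH] //= [gw [v0 v1 vw hv _]].
have [uw w0 w1 hw] := IH gw.
split.
- by rewrite vw uw.
- by rewrite inE negb_or eq_sym v0 w0.
- by rewrite inE negb_or eq_sym v1 w1.
move=> x y; rewrite !inE => /orP[/eqP->|xw] /orP[/eqP->|yw]; rewrite ?eqxx //.
- by move=> _; apply: hv.
- by move=> _; rewrite mulrC; apply: hv.
exact: hw.
Qed.

Definition Asum w := \sum_(x <- w) (Cinv x w)^-1.

Lemma ffm1 x : x != -1 -> ff (-1) x = 1.
Proof.
move=> h; rewrite /ff mulN1r.
have h' : - x - 1 != 0 by rewrite -opprD oppr_eq0 addr_eq0.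
by rewrite [-1 - x]addrC divff.
Qed.

Lemma Asum_odd w : good w -> Asum w = (odd (size w))%:R.
Proof.
elim: w => [|v w IH]; first by rewrite /Asum big_nil.
move=> gw0; have [uw w0 w1 hw] := good_props gw0.
case: gw0 => gw [v0 v1 vw hv hvv].
case: (eqVneq w [::]) => [->|wn].
  by rewrite /Asum big_cons big_nil /Cinv /= eqxx big_nil invr1 addr0.
have hm1 : forall x, x \in v :: w -> -1 * x != 1.
  move=> x xw; rewrite mulN1r; apply: contraNneq w1 => e.
  by rewrite -e opprK.
have hvx : forall x, x \in v :: w -> v * x != 1.
  move=> x; rewrite inE => /orP[/eqP->|xw]; [exact: hvv | exact: hv].
have := Phi_const uw w0 hm1 hvx.
have -> : Phi (-1) (v :: w) = Asum (v :: w) - 1.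
  rewrite /Phi /Asum [\prod_(x <- _) _]big1_seq; last first.
    by move=> x /andP[_ xw] /=; rewrite ffm1 //; apply: contraNneq w1 => <-.
  by congr (_ - _); apply: eq_big_seq => x xw; rewrite ffm1 ?mul1r //; apply: contraNneq w1 => <-.
have -> : Phi v (v :: w) = - Asum w.
  rewrite /Phi !big_cons ffxx !mul0r add0r subr0 /Asum -sumrN.
  apply: eq_big_seq => x xw.
  have xv : x != v by apply: contraNneq vw => <-.
  rewrite /Cinv /= eq_sym (negbTE xv) big_cons ffN invfM mulrA mulNr mulfV ?mulN1r //.
  by rewrite ff_neq0 // mulrC hv.
move/eqP; rewrite subr_eq => /eqP ->; rewrite IH //= .
by case: (odd (size w)) => /=; rewrite ?mulr0n ?mulr1n ?oppr0 ?add0r ?addNr.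
Qed.

Lemma keyK w z : good w -> odd (size w) -> (forall x, x \in w -> z * x != 1) ->
  \sum_(x <- w) ff z x / Cinv x w = \prod_(x <- w) ff z x.
Proof.
move=> gw ow hz; have [uw w0 w1 hw] := good_props gw.
have hm1 : forall x, x \in w -> -1 * x != 1.
  move=> x xw; rewrite mulN1r; apply: contraNneq w1 => e.
  by rewrite -e opprK.
have := Phi_const uw w0 hz hm1.
have -> : Phi (-1) w = Asum w - 1.
  rewrite /Phi /Asum [\prod_(x <- _) _]big1_seq; last first.
    by move=> x /andP[_ xw] /=; rewrite ffm1 //; apply: contraNneq w1 => <-.
  by congr (_ - _); apply: eq_big_seq => x xw; rewrite ffm1 ?mul1r //; apply: contraNneq w1 => <-.
rewrite Asum_odd // ow subrr /Phi => /eqP; rewrite subr_eq0 => /eqP.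
by [].
Qed.

Lemma keyPf w z : good w -> odd (size w) -> (forall x, x \in w -> z * x != 1) ->
  \sum_(k < size w) (-1) ^+ k * ff z (nth 0 w k) * PP (rmk k w)
   = (\prod_(x <- w) ff z x) * PP w.
Proof.
move=> gw ow hz; have [uw w0 w1 hw] := good_props gw.
rewrite mulrC -keyK // big_distrr /= (big_nth 0) big_mkord; apply: eq_bigr => k _.
have hk := ltn_ord k.
have xw : nth 0 w k \in w by rewrite mem_nth.
have Cn : Cinv (nth 0 w k) w != 0.
  rewrite prodf_seq_neq0; apply/allP => y; rewrite mem_rem_uniq // inE => /andP[yx yw].
  by rewrite ff_neq0 // ?(eq_sym _ y) // hw // eq_sym.
rewrite (PP_rmk (w := w) hk) !(rmk_rem uw hk) -/(Cinv (nth 0 w k) w).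
move: Cn; set C := Cinv _ _ => Cn.
field; exact: Cn.
Qed.

End Abstract.

Definition aqg (K : fieldType) (i q : K) (m : nat) : K :=
  \prod_(1 <= j < m.+1) (i * (q ^+ j.-1 + q ^- j.-1) / (q ^+ j - q ^- j)).

Lemma aqg0 (K : fieldType) (i q : K) : aqg i q 0 = 1.
Proof. by rewrite /aqg big_geq. Qed.

Lemma Qone_aqg (K : fieldType) (i q : K) m : Qone (aqg i q) m = aqg i q m.
Proof. by rewrite /Qone; case: eqP => // ->; rewrite /aqg big_geq. Qed.

Lemma aqgS (K : fieldType) (i q : K) m :
  aqg i q m.+1 = aqg i q m * (i * (q ^+ m + q ^- m) / (q ^+ m.+1 - q ^- m.+1)).
Proof. by rewrite /aqg big_nat_recr. Qed.

Lemma Qtwo_rec (R : comPzRingType) (Q : nat -> R) r s :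
  Qtwo Q r s.+1 + Qtwo Q r.+1 s = Qone Q r * Qone Q s.+1 - Qone Q r.+1 * Qone Q s.
Proof.
rewrite /Qtwo big_nat_recl //.
have -> : \sum_(1 <= i < s.+1) (-1) ^+ i.+1 * Qone Q (r + i.+1) * Qone Q (s.+1 - i.+1)
   = - \sum_(1 <= i < s.+1) (-1) ^+ i * Qone Q (r.+1 + i) * Qone Q (s - i).
  rewrite -sumrN; apply: eq_bigr => i _.
  by rewrite exprS addnS addSn subSS mulN1r !mulNr.
rewrite addn1 subn1 /= expr1.
set S := \sum_(1 <= i < s.+1) _.
rewrite mulN1r; ring.
Qed.

Lemma two_row (K : fieldType) (i q : K) (q0 : q != 0)
  (hq : forall n, (0 < n)%N -> q ^+ n != 1) r s : (s < r)%N ->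
  Qtwo (aqg i q) r s = aqg i q r * aqg i q s * ff (q ^+ (2 * r)) (q ^+ (2 * s)).
Proof.
elim: s r => [|s IH] r hsr.
  rewrite /Qtwo big_geq // !Qone_aqg {2}/aqg big_geq // /ff muln0 expr0 mulr1 !mulr0 addr0 mulr1.
  rewrite aqg0 mulr1 divff ?mulr1 // subr_eq0 hq //; lia.
have := Qtwo_rec (aqg i q) r s.
rewrite IH; last by lia.
rewrite !Qone_aqg => h.
have -> : Qtwo (aqg i q) r s.+1 = aqg i q r * aqg i q s.+1 - aqg i q r.+1 * aqg i q s
   - aqg i q r.+1 * aqg i q s * ff (q ^+ (2 * r.+1)) (q ^+ (2 * s)).
  by rewrite -h addrK.
rewrite !aqgS.
set Ar := aqg i q r.
set As := aqg i q s.
rewrite /ff !(mulnC 2) !exprM !exprS.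
have A0 : q ^+ r != 0 by rewrite expf_neq0.
have B0 : q ^+ s != 0 by rewrite expf_neq0.
set A := q ^+ r. set B := q ^+ s.
field.
rewrite /A /B -!exprS -!exprD !subr_eq0 !expf_neq0 // !hq //; first by rewrite q0. all: lia.
Qed.

Lemma aqE : aq = aqg iv qv.
Proof. by []. Qed.

Lemma qvXn n : qv ^+ n = FracField.tofrac ('X ^+ n : {poly algC}).
Proof. by rewrite /qv tofracXn. Qed.

Lemma qv_neq0 : qv != 0.
Proof. by rewrite /qv tofrac_eq0 polyX_eq0. Qed.

Lemma qvX_inj m n : qv ^+ m = qv ^+ n -> m = n.
Proof.
rewrite !qvXn => /eqP; rewrite tofrac_eq => /eqP e.
have := size_polyXn algC m; rewrite e size_polyXn; by case.
Qed.

Lemma qvX_neq1 n : (0 < n)%N -> qv ^+ n != 1.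
Proof.
move=> hn; apply/eqP => e.
have : qv ^+ n = qv ^+ 0 by rewrite e expr0.
by move/qvX_inj => h; rewrite h in hn.
Qed.

Lemma qvX_neqN1 n : qv ^+ n != -1.
Proof.
rewrite qvXn -tofrac1 -tofracN tofrac_eq.
apply/eqP => e; have := size_polyXn algC n; rewrite e size_polyN size_poly1 => -[] n0.
move: e; rewrite -n0 expr0 => /eqP; rewrite -subr_eq0 opprK -mulr2n.
by rewrite -polyC1 -polyCMn polyC_eq0 pnatr_eq0.
Qed.

Definition yv (n : nat) : RF := qv ^+ (2 * n).

Definition gtn_rel := fun a b : nat => (b < a)%N.

Lemma gtn_trans : transitive gtn_rel.
Proof. by move=> a b c /= h1 h2; apply: ltn_trans h2 h1. Qed.

Lemma good_yv (t : seq nat) : sorted gtn_rel t -> good (map yv t).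
Proof.
elim: t => [|a t IH] //= st.
move: st; rewrite (path_sortedE gtn_trans) => /andP[/allP ht st].
split; first exact: IH.
split.
- by rewrite /yv expf_neq0 // qv_neq0.
- exact: qvX_neqN1.
- apply/mapP => -[b bt] /qvX_inj e.
  by have := ht b bt; rewrite /gtn_rel; lia.
- move=> y /mapP[b bt ->]; rewrite /yv -exprD qvX_neq1 //.
  by have := ht b bt; rewrite /gtn_rel; lia.
- case: t ht {IH st} => // b t ht _; rewrite /yv -exprD qvX_neq1 //.
  by have := ht b (mem_head _ _); rewrite /gtn_rel; lia.
Qed.

Lemma big_rmk_nat (F : nat -> RF) (w : seq nat) k : (k < size w)%N ->
  \prod_(y <- w) F y = F (nth 0%N w k) * \prod_(y <- rmk k w) F y.
Proof.
move=> hk; rewrite -{1}(cat_take_drop k w) (drop_nth 0%N hk) /rmk !big_cat big_cons /=.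
by rewrite mulrCA.
Qed.

Lemma rmk_rem_nat (w : seq nat) k : uniq w -> (k < size w)%N -> rmk k w = rem (nth 0%N w k) w.
Proof.
elim: w k => [|v w IH] [|k] //= /andP[vw uw] hk.
  by rewrite /rmk /= drop0 eqxx.
rewrite /rmk /= -/(rmk k w) IH //.
case: eqP => // e; move: vw; by rewrite e mem_nth.
Qed.

Lemma map_rmk (f : nat -> RF) k w : map f (rmk k w) = rmk k (map f w).
Proof. by rewrite /rmk map_cat map_take map_drop. Qed.

Lemma keyPf_map (f : nat -> RF) (t : seq nat) z : good (map f t) -> odd (size t) ->
  (forall x, x \in map f t -> z * x != 1) ->
  \sum_(k < size t) (-1) ^+ k * ff z (f (nth 0%N t k)) * PP (map f (rmk k t))
   = (\prod_(x <- t) ff z (f x)) * PP (map f t).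
Proof.
move=> g o hz.
have := keyPf g; rewrite size_map => /(_ z o hz); rewrite big_map => <-.
apply: eq_bigr => k _.
by rewrite (nth_map 0%N) // map_rmk.
Qed.

Lemma two_row_aq r s : (s < r)%N ->
  Qtwo aq r s = aq r * aq s * ff (yv r) (yv s).
Proof. by move=> h; rewrite aqE two_row //; [exact: qv_neq0 | exact: qvX_neq1]. Qed.

Lemma pf_main fuel s : sorted gtn_rel s -> ~~ odd (size s) -> (size s <= fuel)%N ->
  pfaff_aux (Qtwo aq) fuel s = \prod_(x <- s) aq x * PP (map yv s).
Proof.
elim: fuel s => [|fuel IH] [|x t] //=; try by rewrite big_nil mulr1.
move=> st ev sz.
move: (st); rewrite (path_sortedE gtn_trans) => /andP[/allP ht st'].
have ut : uniq t by apply: (sorted_uniq gtn_trans) => // a; rewrite /gtn_rel ltnn.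
have ot : odd (size t) by move: ev; rewrite negbK.
have hz : forall y, y \in map yv t -> yv x * y != 1.
  move=> y /mapP[b bt ->]; rewrite /yv -exprD qvX_neq1 //.
  by have := ht b bt; rewrite /gtn_rel; lia.
rewrite big_cons -mulrA big_map -(keyPf_map (good_yv st') ot hz) !big_distrr /=.
apply: eq_bigr => -[k hk] _ /=.
have tk : (nth 0%N t k < x)%N by have := ht _ (mem_nth 0%N hk).
change (take k t ++ drop k.+1 t) with (rmk k t).
have sr : sorted gtn_rel (rmk k t).
  by rewrite rmk_rem_nat //; apply: (subseq_sorted gtn_trans (rem_subseq _ _) st').
have szr : size (rmk k t) = (size t).-1 by rewrite rmk_rem_nat // size_rem // mem_nth.
rewrite IH //; last by rewrite szr; move: sz; rewrite ltnS; case: (size t) => //= n h; apply: leq_trans h.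
  rewrite two_row_aq // (big_rmk_nat aq hk).
  ring.
by rewrite szr; case: (size t) ot => //= n; rewrite negbK.
Qed.

Lemma PP_rcons (w : seq RF) a : PP (rcons w a) = PP w * \prod_(x <- w) ff x a.
Proof.
elim: w => [|v w IH] /=; first by rewrite !big_nil mulr1 ?mul1r.
by rewrite IH big_rcons big_cons mulrACA.
Qed.

Lemma PP_map_ord (f : nat -> RF) (l : seq nat) :
  PP (map f l) = \prod_(i < size l) \prod_(j < size l | (i < j)%N)
                    ff (f (nth 0%N l i)) (f (nth 0%N l j)).
Proof.
elim: l => [|a l IH] /=; first by rewrite big_ord0.
rewrite big_ord_recl /= IH; congr (_ * _).
  rewrite [RHS]big_mkcond big_ord_recl /= mul1r big_map (big_nth 0%N) big_mkord.
  by apply: eq_bigr => j _.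
apply: eq_bigr => i _; rewrite [RHS]big_mkcond big_ord_recl /= mul1r [RHS]big_mkcond [LHS]big_mkcond.
by apply: eq_bigr => j _; rewrite /bump /= !add1n ltnS !add0n.
Qed.


Lemma qint_ff_gen (K : fieldType) (q : K) (q0 : q != 0)
  (hq : forall n, (0 < n)%N -> q ^+ n != 1) b d :
  ((q ^+ d.+1 - q ^- d.+1) / (q - q^-1)) /
  ((q ^+ (b + d.+1 + b) - q ^- (b + d.+1 + b)) / (q - q^-1))
  = ff (q ^+ (2 * (b + d.+1))) (q ^+ (2 * b)).
Proof.
rewrite /ff !(mulnC 2) !exprM !exprD.
have B0 : q ^+ b != 0 by rewrite expf_neq0.
have D0 : q ^+ d.+1 != 0 by rewrite expf_neq0.
have h1 : q ^+ 2 != 1 by apply: hq.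
have h2 : q ^+ (d.+1 + d.+1) != 1 by apply: hq.
have h3 : q ^+ ((b + d.+1 + b) + (b + d.+1 + b)) != 1 by apply: hq; lia.
move: h1; rewrite expr2 => h1.
set B := q ^+ b. set D := q ^+ d.+1.
field.
rewrite q0 B0 D0 !subr_eq0 andbT /= andbT.
rewrite h1 andbT /B /D -!exprD hq //; lia.
Qed.

Lemma qint_ff a b : (b < a)%N -> qint (a - b) / qint (a + b) = ff (yv a) (yv b).
Proof.
move=> hab; have [d ->] : exists d, a = (b + d.+1)%N by exists (a - b).-1; lia.
have -> : (b + d.+1 - b = d.+1)%N by rewrite addnC addnK.
rewrite /qint /yv.
exact: (qint_ff_gen qv_neq0 qvX_neq1 b d).
Qed.

Lemma yv_neq1 a : (0 < a)%N -> yv a != 1.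
Proof. by move=> h; rewrite /yv qvX_neq1 //; lia. Qed.

Unset Implicit Arguments.

Theorem theorem2p27 (lam : seq nat) :
  strict_partition lam ->
  Qlam aq lam =
    \prod_(j < size lam) aq (nth 0%N lam j) *
    \prod_(i < size lam) \prod_(j < size lam | (i < j)%N)
       (qint (nth 0%N lam i - nth 0%N lam j) / qint (nth 0%N lam i + nth 0%N lam j)).
Proof.
move=> /andP[st /allP pos].
have st' : sorted gtn_rel lam by [].
have E : \prod_(x <- lam) aq x * PP (map yv lam) =
   \prod_(j < size lam) aq (nth 0%N lam j) *
    \prod_(i < size lam) \prod_(j < size lam | (i < j)%N)
       (qint (nth 0%N lam i - nth 0%N lam j) / qint (nth 0%N lam i + nth 0%N lam j)).
  rewrite (big_nth 0%N) big_mkord PP_map_ord; congr (_ * _).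
  apply: eq_bigr => i _; apply: eq_bigr => j ij.
  rewrite qint_ff //.
  by apply: (sorted_ltn_nth gtn_trans 0%N st') => //; rewrite inE.
rewrite -E /Qlam /pfaff.
case: ifP => od.
  have sr : sorted gtn_rel (rcons lam 0%N).
    clear E od st; case: lam st' pos => [|a l] //= st pos.
    rewrite rcons_path st /gtn_rel /=.
    by apply: pos; rewrite mem_last.
  rewrite pf_main //; last by rewrite size_rcons /= od.
  have a0 : aq 0 = 1 by rewrite aqE aqg0.
  have y0 : yv 0 = 1 by rewrite /yv muln0 expr0.
  rewrite big_rcons map_rcons PP_rcons a0 y0 Monoid.mulm1.
  rewrite [X in _ * (_ * X)]big1_seq; first by rewrite mulr1.
  move=> x /andP[_ /mapP[a al ->]].
  have h := yv_neq1 (pos a al).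
  rewrite /ff mulr1 divff; first by [].
  by rewrite subr_eq0.
rewrite pf_main; [by [] | exact: st' | by rewrite od | exact: leqnn].
Qed.
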